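(* Let $n\ge 1$. For $i,j\in\{1,\dots,n\}$ let $L_i>0$, $\mu_i>0$, $\theta_i\ge 0$, $\lambda_i\ge 0$ and $\gamma_{ij}\ge 0$ be real numbers with $\gamma_{ii}=0$ and $\gamma_{ij}=\gamma_{ji}$. Let $A$ be the $n\times n$ matrix with $A_{ii}=-\big(\frac{\mu_i}{L_i}+\theta_i+\sum_{j=1}^n\frac{\gamma_{ij}}{L_i}\big)$ and $A_{ij}=\frac{\gamma_{ij}}{L_j}$ for $i\ne j$, and $b\in\mathbb{R}^n$ with $b_i=\mu_i-\lambda_i$. Let $y(t)=(y_1(t),\dots,y_n(t))^t$ be the solution of $y'(t)=Ay(t)+b$ and $y^*=-A^{-1}b=(y_1^*,\dots,y_n^* )^t$ its equilibrium point. Put $$L_a=\sum_{i=1}^nL_i,\quad \mu_a=\sum_{i=1}^n\mu_i,\quad \lambda_a=\sum_{i=1}^n\lambda_i,\quad \bar\theta=\frac1n\sum_{i=1}^n\theta_i,$$ let $y_a(t)$ be the solution of the scalar equation $y_a'(t)=-\big(\frac{\mu_a}{L_a}+\bar\theta\big)y_a(t)+(\mu_a-\lambda_a)$, and let $y_a^*=\frac{\mu_a-\lambda_a}{\mu_a/L_a+\bar\theta}$ be its equilibrium value. If $$\frac{\mu_1}{L_1}=\frac{\mu_2}{L_2}=\cdots=\frac{\mu_n}{L_n}\quad\text{and}\quad \theta_1=\cdots=\theta_n,$$ then $\sum_{i=1}^n y_i^*=y_a^*$. Furthermore, if in addition $\sum_{i=1}^n y_i(0)=y_a(0)$, then $\sum_{i=1}^n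 y_i(t)=y_a(t)$ for all $t\ge 0$.
   Context: The vector system models the inventory levels of $n$ warehouses in one echelon with maximum levels $L_i$, maximum supply rates $\mu_i$, deterioration percentages $\theta_i$, demand rates $\lambda_i$ and maximum lateral transshipment rates $\gamma_{ij}$; the scalar equation is the aggregated model in which the $n$ warehouses are combined into one warehouse. The matrix $A$ is invertible (all its eigenvalues have negative real part). *)

(* Defs.v *)
From HB Require Import structures.
From mathcomp Require Import all_boot all_order all_algebra.
From mathcomp Require Import all_classical all_reals all_analysis.
Set Implicit Arguments. Unset Strict Implicit. Unset Printing Implicit Defensive.
Import Order.TTheory GRing.Theory Num.Theory.
Local Open Scope ring_scope.

Section Model.
Variables (R : realType) (n : nat).
Variables (L mu theta lam : 'I_n -> R) (gam : 'I_n -> 'I_n -> R).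

Definition sysA : 'M[R]_n :=
  \matrix_(i, j) if i == j
                 then - (mu i / L i + theta i + \sum_(k < n) gam i k / L i)
                 else gam i j / L j.

Definition sysb : 'cV[R]_n := \col_i (mu i - lam i).

Definition ystar : 'cV[R]_n := - (invmx sysA *m sysb).

Definition L_a : R := \sum_(i < n) L i.
Definition mu_a : R := \sum_(i < n) mu i.
Definition lam_a : R := \sum_(i < n) lam i.
Definition theta_bar : R := n%:R^-1 * \sum_(i < n) theta i.

Definition agg_rate : R := mu_a / L_a + theta_bar.
Definition ya_star : R := (mu_a - lam_a) / agg_rate.
End Model.

(* Main.v *)
Require Import Defs.
From HB Require Import structures.
From mathcomp Require Import all_boot all_order all_algebra.
From mathcomp Require Import all_classical all_reals all_analysis.
From mathcomp Require Import ring lra.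
Import Order.TTheory GRing.Theory Num.Theory.
Local Open Scope ring_scope.

Lemma zero_ode (R : realType) (r : R) (D : R -> R) :
  (forall t, is_derive t (1:R) D (- r * D t)) -> D 0 = 0 -> forall t, D t = 0.
Proof.
move=> HD D0 t.
pose g := (D * (expR \o (r \*: id)))%R.
have Hg : forall x, is_derive x (1:R) g 0.
  move=> x.
  have He := is_derive1_comp (is_derive_expR ((r \*: id) x)) (is_deriveZ r (is_derive_id x 1)).
  have := is_deriveM (HD x) He.
  move=> H; apply: is_derive_eq H _.

  rewrite /= /GRing.scale /=. ring.
have := is_derive_0_is_cst t 0 Hg.
move=> H; have : D t * expR (r * t) = D 0 * expR (r * 0) by exact: H.
rewrite D0 mul0r => /eqP; rewrite mulf_eq0 expR_eq0 orbF => /eqP //.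
Qed.

Lemma colsum (R : realType) (n : nat)
  (L mu theta : 'I_n -> R) (gam : 'I_n -> 'I_n -> R) :
  (forall i, gam i i = 0) -> (forall i j, gam i j = gam j i) ->
  forall j, \sum_i sysA L mu theta gam i j = - (mu j / L j + theta j).
Proof.
move=> g0 gs j.
rewrite (bigD1 j) //= /sysA mxE eqxx.
have -> : \sum_(i < n | i != j) (\matrix_(i0, j0) (if i0 == j0
        then - (mu i0 / L i0 + theta i0 + \sum_(k < n) gam i0 k / L i0)
        else gam i0 j0 / L j0)) i j = \sum_(k < n) gam j k / L j.
  rewrite [RHS](bigD1 j) //= g0 mul0r add0r.
  apply: eq_bigr => i /negPf Hij; by rewrite mxE Hij gs.
ring.
Qed.

Lemma sumA (R : realType) (n : nat)
  (L mu theta : 'I_n -> R) (gam : 'I_n -> 'I_n -> R) (r : R) (v : 'cV[R]_n) :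
  (forall i, gam i i = 0) -> (forall i j, gam i j = gam j i) ->
  (forall j, mu j / L j + theta j = r) ->
  \sum_i (sysA L mu theta gam *m v) i 0 = - r * \sum_i v i 0.
Proof.
move=> g0 gs hr.
under eq_bigr do rewrite mxE.
rewrite exchange_big /= mulr_sumr; apply: eq_bigr => j _.
by rewrite -mulr_suml colsum // hr mulNr.
Qed.

Theorem proposition4 (R : realType) (n : nat)
  (L mu theta lam : 'I_n -> R) (gam : 'I_n -> 'I_n -> R)
  (y : R -> 'cV[R]_n) (ya : R -> R) :
  (0 < n)%N ->
  (forall i, 0 < L i) -> (forall i, 0 < mu i) ->
  (forall i, 0 <= theta i) -> (forall i, 0 <= lam i) ->
  (forall i j, 0 <= gam i j) -> (forall i, gam i i = 0) ->
  (forall i j, gam i j = gam j i) ->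
  sysA L mu theta gam \in unitmx ->
  (forall (t : R) (i : 'I_n), is_derive t (1 : R) (fun s => y s i 0)
                 ((sysA L mu theta gam *m y t + sysb mu lam) i 0)) ->
  (forall t : R, is_derive t (1 : R) ya
                 (- agg_rate L mu theta * ya t + (mu_a mu - lam_a lam))) ->
  (forall i j, mu i / L i = mu j / L j) ->
  (forall i j, theta i = theta j) ->
  (\sum_(i < n) ystar L mu theta lam gam i 0 = ya_star L mu theta lam)
  /\ (\sum_(i < n) y 0 i 0 = ya 0 ->
      forall t, 0 <= t -> \sum_(i < n) y t i 0 = ya t).
Proof.
move=> n0 Lp mup thp lamp gamp g0 gs Au Hy Hya Hmu Hth.
pose i0 := Ordinal n0.
pose c := mu i0 / L i0.
pose r := c + theta i0.
have hr : forall j, mu j / L j + theta j = r by move=> j; rewrite /r /c (Hmu j i0) (Hth j i0).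
have cp : 0 < c by rewrite /c divr_gt0.
have rp : 0 < r by rewrite /r; apply: ltr_wpDr.
have Lap : 0 < L_a L.
  rewrite /L_a (bigD1 i0) //=; apply: ltr_pwDl => //.
  by apply: sumr_ge0 => i _; apply: ltW.
have ar : agg_rate L mu theta = r.
  rewrite /agg_rate /r; congr (_ + _).
    rewrite /mu_a.
    have -> : \sum_(i < n) mu i = c * L_a L.
      rewrite /L_a mulr_sumr; apply: eq_bigr => i _.
      by rewrite /c (Hmu i0 i) divfK //; apply: lt0r_neq0.
    by rewrite mulfK //; apply: lt0r_neq0.
  rewrite /theta_bar.
  under eq_bigr do rewrite (Hth _ i0).
  rewrite sumr_const card_ord -[theta i0 *+ n]mulr_natr mulrCA mulVf ?mulr1 //.
  by rewrite pnatr_eq0 -lt0n.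
have sb : \sum_i sysb mu lam i 0 = mu_a mu - lam_a lam.
  by rewrite /mu_a /lam_a -sumrB; apply: eq_bigr => i _; rewrite mxE.
split.
  have e : sysA L mu theta gam *m ystar L mu theta lam gam = - sysb mu lam.
    by rewrite /ystar mulmxN mulmxA mulmxV // mul1mx.
  have := @sumA R n L mu theta gam r (ystar L mu theta lam gam) g0 gs hr.
  rewrite e.
  under eq_bigr do rewrite mxE.
  rewrite sumrN sb /ya_star ar => h.
  have rn : r != 0 by apply: lt0r_neq0.
  apply: (mulIf rn); rewrite divfK //; apply: oppr_inj; rewrite h; ring.
move=> H0 t _.
pose D := fun s => \sum_(i < n) y s i 0 - ya s.
have D0 : D 0 = 0 by rewrite /D H0 subrr.
have HD : forall s, is_derive s (1:R) D (- r * D s).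
  move=> s.
  have HS : is_derive s (1:R) (\sum_(i < n) (fun u => y u i 0))
     (\sum_(i < n) ((sysA L mu theta gam *m y s + sysb mu lam) i 0)).
    by apply: is_derive_sum => i; exact: Hy.
  have E : - r * D s = (\sum_(i < n) ((sysA L mu theta gam *m y s + sysb mu lam) i 0))
     - (- agg_rate L mu theta * ya s + (mu_a mu - lam_a lam)).
    under [X in _ = X - _]eq_bigr do rewrite mxE.
    rewrite big_split /= (@sumA R n L mu theta gam r (y s) g0 gs hr) sb ar /D; ring.
  rewrite E.
  have -> : D = (\sum_(i < n) (fun u => y u i 0)) - ya.
    by apply/funext => u; rewrite /D fct_sumE.
  exact: is_deriveB.
have := @zero_ode R r D HD D0 t.
rewrite /D => /eqP; rewrite subr_eq0 => /eqP //.
Qed.
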